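(* Consider the independent block-fading binary symmetric wiretap channel with parameters $q_1,q_1^*\in[0,1]$, $q_2=1-q_1$, $q_2^*=1-q_1^*$, and crossover probabilities satisfying $p_1\le p_1^*\le p_2\le p_2^*\le 0.5$. Its secrecy capacity with channel state information available only at the decoders satisfies $$C^s_{\textrm{CSI-D}}\le q_1q_1^*H(p_1^* )+q_2^*H(p_2^* )-q_1H(p_1)-q_2q_2^*H(p_2).$$
   Context: $H(p)=-p\log_2 p-(1-p)\log_2(1-p)$ is the binary entropy function, and BSC$(p)$ denotes the binary symmetric channel with crossover probability $p$. Independent block-fading binary symmetric wiretap channel: the transmitter sends $NB$ binary symbols $X_{1:NB}$ organized in $B$ fading blocks of length $N$. Each block $k$ has a main-channel state $S_k\in\{1,2\}$ with $\Pr(S_k=1)=q_1$ and an eavesdropper-channel state $S^*_k\in\{1,2\}$ with $\Pr(S_k^*=1)=q_1^*$; all these states are mutually independent (across blocks and between the two channels) and constant within a block. Within block $k$, the legitimate receiver observes the output $Y$ of $N$ independent uses of BSC$(p_{S_k})$, and the eavesdropper observes the output $Z$ of $N$ independent uses of BSC$(p^*_{S^*_k})$. Let $\mathsf{S}$ denote all the state realizations $(S_k,S_k^* )_{k=1}^B$. A code consists of a (possibly randomized) encoder $X_{1:NB}=f(\mathsf{M})$ of a uniformly distributed message $\mathsf{M}$, which knows only the state distributions (not the realizations), and a decoder $\hat{\mathsf{M}}=g(Y_{1:NB},\mathsf{S})$; its rate is $\frac{1}{NB}\log_2$ of the message-set size. A rate $R$ is achievable if there are such codes of rate at least $R$ (asymptotically)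 with $N,B\to\infty$ such that $\Pr\{\mathsf{M}\ne\hat{\mathsf{M}}\}\to0$ and $\frac{1}{NB}I(\mathsf{M};Z_{1:NB}\mid\mathsf{S})\to 0$. $C^s_{\textrm{CSI-D}}$ is the supremum of achievable rates. *)

(* Defs.v *)
From HB Require Import structures.
From mathcomp Require Import all_boot all_order all_algebra.
From mathcomp Require Import all_classical all_reals all_analysis.
Set Implicit Arguments. Unset Strict Implicit. Unset Printing Implicit Defensive.
Import Order.TTheory GRing.Theory Num.Theory.
Local Open Scope ring_scope.
Local Open Scope classical_set_scope.

Section BFWiretap.
Variable R : realType.

(* base-2 logarithm; ln 0 = 0 in mathcomp-analysis, giving 0 log 0 = 0 *)
Definition log2 (x : R) : R := ln x / ln 2.

Definition H2 (p : R) : R := - p * log2 p - (1 - p) * log2 (1 - p).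

(* NB binary symbols organised in B blocks of length N: symbol (k,i) is the
   i-th symbol of block k *)
Definition word (N B : nat) := {ffun 'I_B * 'I_N -> bool}.
(* state realizations of the B blocks: true = state 1, false = state 2 *)
Definition state (B : nat) := {ffun 'I_B -> bool}.

Definition pstate (q : R) (B : nat) (s : state B) : R :=
  \prod_(k < B) (if s k then q else 1 - q).

Definition bfbsc (pa pb : R) (N B : nat) (s : state B) (x y : word N B) : R :=
  \prod_(ki : 'I_B * 'I_N)
     (let p := if s ki.1 then pa else pb in
      if y ki == x ki then 1 - p else p).

Definition is_encoder (N B M : nat) (f : 'I_M -> word N B -> R) : Prop :=
  forall m : 'I_M, (forall x, 0 <= f m x) /\ \sum_(x : word N B) f m x = 1.

(* Pr{ M <> g(Y, S) }, message uniform on 'I_M; the decoder sees the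
   legitimate output Y and all states S = (S_k, S*_k)_k *)
Definition err_prob (q1 q1s p1 p2 : R) (N B M : nat)
    (f : 'I_M -> word N B -> R) (g : word N B -> state B -> state B -> 'I_M) : R :=
  \sum_(s : state B) \sum_(ss : state B) \sum_(m < M) \sum_(x : word N B)
    \sum_(y : word N B)
      (M%:R)^-1 * pstate q1 s * pstate q1s ss * f m x * bfbsc p1 p2 s x y
        * (if g y s ss != m then 1 else 0).

Definition zcond (p1s p2s : R) (N B M : nat) (f : 'I_M -> word N B -> R)
    (m : 'I_M) (ss : state B) (z : word N B) : R :=
  \sum_(x : word N B) f m x * bfbsc p1s p2s ss x z.

Definition zmarg (p1s p2s : R) (N B M : nat) (f : 'I_M -> word N B -> R)
    (ss : state B) (z : word N B) : R :=
  (M%:R)^-1 * \sum_(m < M) zcond p1s p2s f m ss z.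

(* I(M ; Z | S) in bits *)
Definition leakage (q1 q1s p1s p2s : R) (N B M : nat)
    (f : 'I_M -> word N B -> R) : R :=
  \sum_(s : state B) \sum_(ss : state B) pstate q1 s * pstate q1s ss *
    \sum_(m < M) \sum_(z : word N B)
      (M%:R)^-1 * zcond p1s p2s f m ss z *
        log2 (zcond p1s p2s f m ss z / zmarg p1s p2s f ss z).

Definition achievable (q1 q1s p1 p2 p1s p2s : R) (Rt : R) : Prop :=
  forall eps : R, 0 < eps -> forall N0 B0 : nat,
  exists (N B M : nat) (f : 'I_M -> word N B -> R)
         (g : word N B -> state B -> state B -> 'I_M),
    [/\ (N0 <= N)%N, (B0 <= B)%N, (0 < M)%N & is_encoder f] /\
    [/\ log2 (M%:R) / ((N * B)%:R) >= Rt - eps,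
        err_prob q1 q1s p1 p2 f g <= eps &
        leakage q1 q1s p1s p2s f / ((N * B)%:R) <= eps].

Definition CsCSID (q1 q1s p1 p2 p1s p2s : R) : \bar R :=
  ereal_sup [set (r%:E) | r in [set r | achievable q1 q1s p1 p2 p1s p2s r]].

End BFWiretap.

(* Main.v *)
Require Import Defs.
From HB Require Import structures.
From mathcomp Require Import all_boot all_order all_algebra.
From mathcomp Require Import all_classical all_reals all_analysis.
From mathcomp Require Import ring lra.
Import Order.TTheory GRing.Theory Num.Theory.
Set Implicit Arguments. Unset Strict Implicit. Unset Printing Implicit Defensive.
Local Open Scope ring_scope.

Section Abs.
Variable R : realType.

Lemma ln_le_sub1 (x : R) : 0 < x -> ln x <= x - 1.
Proof.
move=> x0; have := @le_ln1Dx R (x - 1).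
rewrite addrCA subrr addr0; apply; lra.
Qed.

Lemma logsum_term (a b A B : R) : 0 <= a -> 0 <= b -> (0 < a -> 0 < b) ->
  0 < A -> 0 < B ->
  a * ln (A / B) <= a * ln (a / b) + b * A / B - a.
Proof.
move=> a0 b0 ab A0 B0.
have [->|ap] := eqVneq a 0.
  rewrite !mul0r subr0 add0r; apply: divr_ge0; [apply: mulr_ge0|]; lra.
have a0' : 0 < a by rewrite lt_def ap.
have b0' := ab a0'.
have ABp : 0 < A / B by apply: divr_gt0.
have abp : 0 < a / b by apply: divr_gt0.
have := @ln_le_sub1 _ (divr_gt0 ABp abp).
have L : ln (A / B / (a / b)) = ln (A / B) - ln (a / b) by rewrite ln_div ?posrE.
rewrite L => H.
have H2 := ler_wpM2l (ltW a0') H.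
have E : a * (A / B / (a / b) - 1) = b * A / B - a.
  by field; rewrite ?ap; apply/andP; split; rewrite gt_eqF.
rewrite E mulrBr in H2; lra.
Qed.

Lemma logsum (I : finType) (a b : I -> R) :
  (forall i, 0 <= a i) -> (forall i, 0 <= b i) -> (forall i, 0 < a i -> 0 < b i) ->
  (\sum_i a i) * ln ((\sum_i a i) / (\sum_i b i)) <= \sum_i a i * ln (a i / b i).
Proof.
move=> a0 b0 ab.
have [A0|Ap] := eqVneq (\sum_i a i) 0.
  rewrite A0 mul0r; apply: sumr_ge0 => i _.
  by rewrite (psumr_eq0P (fun i _ => a0 i) A0) // mul0r.
have A0' : 0 < \sum_i a i by rewrite lt_def Ap sumr_ge0.
have [i0 ai0] : exists i, 0 < a i.
  case: (boolP [exists i, 0 < a i]) => [/existsP //|H].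
  suff : \sum_i a i = 0 by move/eqP: Ap.
  apply: big1 => i _.
  have : ~~ (0 < a i) by apply: contra H => h; apply/existsP; exists i.
  by rewrite -leNgt => h; apply/le_anti; rewrite h a0.
have B0 : 0 < \sum_i b i.
  rewrite (bigD1 i0) //=; apply: ltr_pwDl; first exact: ab.
  by apply: sumr_ge0.
set A := \sum_i a i in A0' *; set B := \sum_i b i in B0 *.
have H : \sum_i a i * ln (A / B) <= \sum_i (a i * ln (a i / b i) + b i * A / B - a i).
  by apply: ler_sum => i _; apply: logsum_term; [exact: a0|exact: b0|exact: ab|exact: A0'|exact: B0].
rewrite -mulr_suml -/A in H.
move: H; rewrite big_split /= sumrN big_split /= -!/A.
have -> : \sum_i b i * A / B = A.
  rewrite -mulr_suml -mulr_suml -/B; field; rewrite gt_eqF //.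
lra.
Qed.

Section Info.
Variable W : finType.

Definition app (K : W -> W -> R) (u : W -> R) : W -> R := fun z => \sum_y K z y * u y.
Definition mean (J : finType) (w : J -> R) (v : J -> W -> R) : W -> R :=
  fun z => \sum_i w i * v i z.
Definition MI (J : finType) (w : J -> R) (v : J -> W -> R) : R :=
  \sum_j \sum_z w j * v j z * ln (v j z / mean w v z).
Definition Hn (v : W -> R) : R := - \sum_z v z * ln (v z).

Lemma mean_gt0 (J : finType) (w : J -> R) (v : J -> W -> R) j z :
  (forall j, 0 <= w j) -> (forall j z, 0 <= v j z) ->
  0 < w j * v j z -> 0 < mean w v z.
Proof.
move=> w0 v0 p; rewrite /mean (bigD1 j) //=; apply: ltr_pwDl => //.
by apply: sumr_ge0 => i _; apply: mulr_ge0.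
Qed.

Lemma MI_Hn (J : finType) (w : J -> R) (v : J -> W -> R) :
  (forall j, 0 <= w j) -> (forall j z, 0 <= v j z) ->
  MI w v = Hn (mean w v) - \sum_j w j * Hn (v j).
Proof.
move=> w0 v0; rewrite /MI /Hn.
have E : forall j z, w j * v j z * ln (v j z / mean w v z) =
   w j * (v j z * ln (v j z)) - w j * v j z * ln (mean w v z).
  move=> j z; have [|nz] := eqVneq (w j * v j z) 0.
    by rewrite mulrA => E0; rewrite E0 !mul0r subr0.
  have p : 0 < w j * v j z by rewrite lt_def nz mulr_ge0.
  have vp : 0 < v j z.
    by rewrite lt_def (v0 j z) andbT; apply: contraNneq nz => ->; rewrite mulr0.
  have mp := mean_gt0 w0 v0 p.
  by rewrite ln_div ?posrE // mulrBr mulrA.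
under eq_bigr do under eq_bigr do rewrite E.
rewrite (eq_bigr (fun j => w j * (\sum_z v j z * ln (v j z)) -
    \sum_z w j * v j z * ln (mean w v z))); last first.
  by move=> j _; rewrite sumrB mulr_sumr.
rewrite sumrB exchange_big /=.
under [X in _ - X = _]eq_bigr do rewrite -mulr_suml.
rewrite /mean.
under [X in _ = _ - X]eq_bigr do rewrite mulrN.
by rewrite sumrN opprK addrC.
Qed.

Lemma ent_inc (K : W -> W -> R) (v : W -> R) :
  (forall y, 0 <= v y) -> (forall z y, 0 <= K z y) ->
  (forall y, \sum_z K z y = 1) -> (forall z, \sum_y K z y = 1) ->
  Hn v <= Hn (app K v).
Proof.
move=> v0 K0 Kc Kr; rewrite /Hn lerN2.
have H : forall z, app K v z * ln (app K v z) <= \sum_y K z y * (v y * ln (v y)).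
  move=> z.
  have h1 : forall y, 0 <= K z y * v y by move=> y; apply: mulr_ge0.
  have h3 : forall y, 0 < K z y * v y -> 0 < K z y.
    move=> y p; rewrite lt_def (K0 z y) andbT; apply: contraTneq p => ->.
    by rewrite mul0r ltxx.
  have L := @logsum W (fun y => K z y * v y) (K z) h1 (K0 z) h3.
  rewrite Kr divr1 in L; apply: le_trans L _.
  apply: ler_sum => y _; have [->|nz] := eqVneq (K z y) 0; first by rewrite !mul0r.
  by rewrite [K z y * v y]mulrC mulfK // mulrA [v y * K z y]mulrC.
apply: le_trans (ler_sum _ (fun z _ => H z)) _.
rewrite exchange_big /=; apply: ler_sum => y _.
by rewrite -mulr_suml Kc mul1r.
Qed.

Lemma dproc (J : finType) (w : J -> R) (u : J -> W -> R) (K : W -> W -> R) :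
  (forall j, 0 <= w j) -> (forall j y, 0 <= u j y) -> (forall z y, 0 <= K z y) ->
  (forall y, \sum_z K z y = 1) ->
  MI w (fun j => app K (u j)) <= MI w u.
Proof.
move=> w0 u0 K0 Kc; rewrite /MI; apply: ler_sum => j _.
have mE : forall z, mean w (fun j => app K (u j)) z = app K (mean w u) z.
  move=> z; rewrite /mean /app.
  under eq_bigr do rewrite mulr_sumr.
  rewrite exchange_big /=; apply: eq_bigr => y _; rewrite mulr_sumr.
  by apply: eq_bigr => i _; rewrite mulrCA.
under eq_bigr do rewrite mE -mulrA.
under [X in _ <= X]eq_bigr do rewrite -mulrA.
rewrite -!mulr_sumr.
have [->|wn] := eqVneq (w j) 0; first by rewrite !mul0r.
have wp : 0 < w j by rewrite lt_def wn w0.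
rewrite ler_pM2l //.
have H : forall z, app K (u j) z * ln (app K (u j) z / app K (mean w u) z) <=
    \sum_y K z y * (u j y * ln (u j y / mean w u y)).
  move=> z.
  have h1 : forall y, 0 <= K z y * u j y by move=> y; apply: mulr_ge0.
  have h2 : forall y, 0 <= K z y * mean w u y.
    move=> y; apply: mulr_ge0 => //; apply: sumr_ge0 => i _; exact: mulr_ge0.
  have h3 : forall y, 0 < K z y * u j y -> 0 < K z y * mean w u y.
    move=> y0; rewrite lt_def => /andP [nz _]; rewrite mulf_eq0 negb_or in nz.
    case/andP: nz => Kn un.
    apply: mulr_gt0; first by rewrite lt_def Kn K0.
    apply: (@mean_gt0 J w u j y0) => //.
    by apply: mulr_gt0 => //; rewrite lt_def un u0.
  have L := @logsum W (fun y => K z y * u j y) (fun y => K z y * mean w u y) h1 h2 h3.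
  apply: le_trans L _.
  apply: ler_sum => y _; have [->|nz] := eqVneq (K z y) 0; first by rewrite !mul0r.
  by rewrite -mulrA invfM mulrACA divff // mul1r.
apply: le_trans (ler_sum _ (fun z _ => H z)) _.
rewrite exchange_big /=; apply: ler_sum => y _.
by rewrite -mulr_suml Kc mul1r.
Qed.

Lemma fano (M : nat) (v : 'I_M -> W -> R) (g : W -> 'I_M) :
  (0 < M)%N -> (forall m y, 0 <= v m y) -> (forall m, \sum_y v m y = 1) ->
  ln M%:R <= ln 2 + (\sum_m \sum_y M%:R^-1 * v m y * (if g y != m then 1 else 0))
     * ln M%:R + MI (fun _ => M%:R^-1) v.
Proof.
move=> M0 v0 vs.
have Mp : 0 < M%:R :> R by rewrite ltr0n.
set w := M%:R^-1.
have wp : 0 < w by rewrite invr_gt0.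
set mn := mean (fun _ => w) v.
have mn0 : forall y, 0 <= mn y.
  by move=> y; apply: sumr_ge0 => i _; apply: mulr_ge0 => //; apply: ltW.
have mnp : forall m y, 0 < v m y -> 0 < mn y.
  move=> m y vp; apply: (@mean_gt0 _ (fun _ => w) v m y) => //.
  - by move=> _; apply: ltW.
  - by apply: mulr_gt0.
have summn : \sum_y mn y = 1.
  rewrite /mn /mean exchange_big /=.
  under eq_bigr do rewrite -mulr_sumr vs mulr1.
  by rewrite sumr_const card_ord /w -[_ *+ _]mulr_natr mulVf // gt_eqF.
pose r (m : 'I_M) (y : W) : R := if g y == m then 2^-1 else (2 * M%:R)^-1.
have rp : forall m y, 0 < r m y.
  by move=> m y; rewrite /r; case: ifP => _; rewrite invr_gt0 // mulr_gt0.
have rs : forall y, \sum_m r m y <= 1.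
  move=> y; rewrite (bigD1 (g y)) //= /r eqxx.
  rewrite (eq_bigr (fun _ => (2 * M%:R)^-1)); last first.
    by move=> m /negbTE; rewrite eq_sym => ->.
  rewrite sumr_const cardC1 card_ord -[_ *+ M.-1]mulr_natr.
  have h1 : (2 * M%:R)^-1 * M.-1%:R <= (2 * M%:R)^-1 * M%:R :> R.
    by apply: ler_wpM2l; [rewrite invr_ge0 mulr_ge0 // ltW|rewrite ler_nat leq_pred].
  have h2 : (2 * M%:R)^-1 * M%:R = 2^-1 :> R.
    by rewrite invfM; field; rewrite gt_eqF.
  have h3 : 2^-1 + 2^-1 = 1 :> R by field.
  lra.
pose a (p : 'I_M * W) := w * v p.1 p.2.
pose b (p : 'I_M * W) := mn p.2 * r p.1 p.2.
have a0 : forall p, 0 <= a p by move=> p; apply: mulr_ge0 => //; apply: ltW.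
have b0 : forall p, 0 <= b p by move=> p; apply: mulr_ge0 => //; apply: ltW.
have ab : forall p, 0 < a p -> 0 < b p.
  move=> [m y] /=; rewrite /a /b /= pmulr_rgt0 // => h.
  by apply: mulr_gt0; [exact: (mnp m y)|].
have L := logsum a0 b0 ab.
have A1 : \sum_p a p = 1.
  rewrite -(pair_big xpredT xpredT (fun m y => w * v m y)) /=.
  under eq_bigr do rewrite -mulr_sumr vs mulr1.
  by rewrite sumr_const card_ord /w -[_ *+ _]mulr_natr mulVf // gt_eqF.
have B1 : \sum_p b p <= 1.
  rewrite -(pair_big xpredT xpredT (fun m y => mn y * r m y)) /= exchange_big /=.
  rewrite -summn; apply: ler_sum => y _; rewrite -mulr_sumr.
  by rewrite -[X in _ <= X]mulr1; apply: ler_wpM2l.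
have B0 : 0 <= \sum_p b p by apply: sumr_ge0.
have pos : 0 <= \sum_p a p * ln (a p / b p).
  apply: le_trans L; rewrite A1 mul1r div1r.
  have [->|Bn] := eqVneq (\sum_p b p) 0; first by rewrite invr0 ln0.
  by apply: ln_ge0; rewrite invf_ge1 // lt_def Bn B0.
pose e (p : 'I_M * W) : R := if g p.2 != p.1 then 1 else 0.
have term : forall p, a p * ln (a p / b p) =
    w * v p.1 p.2 * ln (v p.1 p.2 / mn p.2) + a p * (ln 2 - ln M%:R + ln M%:R * e p).
  move=> [m y] /=; rewrite /a /b /e /=.
  have [->|vn] := eqVneq (v m y) 0; first by rewrite !(mulr0, mul0r) addr0.
  have vp : 0 < v m y by rewrite lt_def vn v0.
  have mp := mnp m y vp.
  have -> : w * v m y / (mn y * r m y) = (v m y / mn y) * (w / r m y).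
    by field; rewrite gt_eqF ?rp // gt_eqF.
  rewrite lnM ?posrE ?divr_gt0 // mulrDr; congr (_ + _); congr (_ * _).
  rewrite /r /w; case: eqP => _ /=.
    rewrite invrK lnM ?posrE ?invr_gt0 // lnV ?posrE //; lra.
  have -> : M%:R^-1 / (2 * M%:R)^-1 = 2 :> R by rewrite invrK; field; rewrite gt_eqF.
  lra.
rewrite (eq_bigr _ (fun p _ => term p)) big_split /= in pos.
have E3 : \sum_p a p * (ln 2 - ln M%:R + ln M%:R * e p) =
    (\sum_p a p) * (ln 2 - ln M%:R) + \sum_p a p * (ln M%:R * e p).
  by rewrite mulr_suml -big_split /=; apply: eq_bigr => p _; ring.
rewrite E3 A1 mul1r in pos.
have E1 : \sum_p w * v p.1 p.2 * ln (v p.1 p.2 / mn p.2) = MI (fun _ => w) v.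
  by rewrite /MI (pair_big xpredT xpredT (fun m y => w * v m y * ln (v m y / mn y))).
have E2 : \sum_p a p * (ln M%:R * e p) =
   (\sum_m \sum_y w * v m y * (if g y != m then 1 else 0)) * ln M%:R.
  rewrite (pair_big xpredT xpredT (fun m y => w * v m y * (if g y != m then 1 else 0))) /=.
  rewrite mulr_suml; apply: eq_bigr => p _; by rewrite /a /e mulrA mulrAC.
rewrite E1 E2 in pos.
lra.
Qed.

Lemma MI_ext (J : finType) (w : J -> R) (v v' : J -> W -> R) :
  (forall j z, v j z = v' j z) -> MI w v = MI w v'.
Proof.
move=> E; rewrite /MI /mean; apply: eq_bigr => j _; apply: eq_bigr => z _.
by rewrite E; under eq_bigr do rewrite E.
Qed.

Lemma Hn_ext (v v' : W -> R) : (forall z, v z = v' z) -> Hn v = Hn v'.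
Proof. by move=> E; rewrite /Hn; under eq_bigr do rewrite E. Qed.

Lemma app_comp (Ka Kd Kb : W -> W -> R) (u : W -> R) z :
  (forall z x, Ka z x = \sum_y Kd z y * Kb y x) ->
  app Ka u z = app Kd (app Kb u) z.
Proof.
move=> E; rewrite /app; under eq_bigr do rewrite E mulr_suml.
rewrite exchange_big /=; apply: eq_bigr => y _; rewrite mulr_sumr.
by apply: eq_bigr => x _; rewrite mulrA.
Qed.

Lemma mean_app (J : finType) (w : J -> R) (u : J -> W -> R) (K : W -> W -> R) z :
  mean w (fun j => app K (u j)) z = app K (mean w u) z.
Proof.
rewrite /mean /app.
under eq_bigr do rewrite mulr_sumr.
rewrite exchange_big /=; apply: eq_bigr => y _; rewrite mulr_sumr.
by apply: eq_bigr => i _; rewrite mulrCA.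
Qed.

Lemma convex_gap (Kb Kc Ke : W -> W -> R) (D : R) (u : W -> R) :
  (forall x, 0 <= u x) -> \sum_x u x = 1 ->
  (forall z y, 0 <= Kb z y) -> (forall z y, 0 <= Ke z y) ->
  (forall y, \sum_z Ke z y = 1) ->
  (forall z x, Kc z x = \sum_y Ke z y * Kb y x) ->
  (forall x, Hn (fun z => Kc z x) - Hn (fun z => Kb z x) = D) ->
  Hn (app Kc u) - Hn (app Kb u) <= D.
Proof.
move=> u0 us Kb0 Ke0 Kes Ec HD.
pose vb := fun x z => Kb z x.
have H := @dproc W u vb Ke u0 (fun x z => Kb0 z x) Ke0 Kes.
have vc0 : forall x z, 0 <= app Ke (vb x) z.
  by move=> x z; apply: sumr_ge0 => y _; exact: mulr_ge0 (Ke0 _ _) (Kb0 _ _).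
rewrite !MI_Hn // in H; last by move=> x z; apply: Kb0.
have E1 : forall z, mean u (fun x => app Ke (vb x)) z = app Kc u z.
  move=> z; rewrite /mean /app; apply: eq_bigr => x _.
  by rewrite Ec /vb mulrC.
have E2 : forall z, mean u vb z = app Kb u z.
  by move=> z; rewrite /mean /app; apply: eq_bigr => x _; rewrite mulrC.
rewrite (Hn_ext E1) (Hn_ext E2) in H.
have E3 : forall x, Hn (app Ke (vb x)) = Hn (vb x) + D.
  move=> x; rewrite -(HD x) addrC subrK; apply: Hn_ext => z.
  by rewrite Ec.
have E4 : \sum_x u x * Hn (app Ke (vb x)) = \sum_x u x * Hn (vb x) + D.
  rewrite -[D]mul1r -us mulr_suml -big_split /=; apply: eq_bigr => x _.
  by rewrite E3 mulrDr.
rewrite E4 in H; lra.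
Qed.

Lemma perstate (M : nat) (f : 'I_M -> W -> R) (g : W -> 'I_M)
    (Ka Kb Kc Kd Ke : W -> W -> R) (D : R) :
  (0 < M)%N -> (forall m x, 0 <= f m x) -> (forall m, \sum_x f m x = 1) ->
  (forall z y, 0 <= Kb z y) -> (forall z y, 0 <= Kd z y) -> (forall z y, 0 <= Ke z y) ->
  (forall y, \sum_z Kb z y = 1) -> (forall y, \sum_z Kd z y = 1) ->
  (forall y, \sum_z Ke z y = 1) -> (forall z, \sum_y Ke z y = 1) ->
  (forall z x, Ka z x = \sum_y Kd z y * Kb y x) ->
  (forall z x, Kc z x = \sum_y Ke z y * Kb y x) ->
  (forall x, Hn (fun z => Kc z x) - Hn (fun z => Kb z x) = D) ->
  ln M%:R <= ln 2 + (\sum_m \sum_y M%:R^-1 * app Ka (f m) y *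
      (if g y != m then 1 else 0)) * ln M%:R
     + MI (fun _ => M%:R^-1) (fun m => app Kc (f m)) + D.
Proof.
move=> M0 f0 fs Kb0 Kd0 Ke0 Kbs Kds Kes Ker Ea Ec HD.
have Mp : 0 < M%:R :> R by rewrite ltr0n.
have w0 : forall m : 'I_M, 0 <= M%:R^-1 :> R by move=> _; rewrite invr_ge0 ltW.
have Ka0 : forall z x, 0 <= Ka z x.
  by move=> z x; rewrite Ea; apply: sumr_ge0 => y _; apply: mulr_ge0.
have Kas : forall x, \sum_z Ka z x = 1.
  move=> x; under eq_bigr do rewrite Ea.
  rewrite exchange_big /= -(Kbs x); apply: eq_bigr => y _.
  by rewrite -mulr_suml Kds mul1r.
have appge0 : forall K : W -> W -> R, (forall z y, 0 <= K z y) ->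
    forall u, (forall x, 0 <= u x) -> forall z, 0 <= app K u z.
  by move=> K K0 u u0 z; apply: sumr_ge0 => y _; apply: mulr_ge0.
have apps : forall K : W -> W -> R, (forall y, \sum_z K z y = 1) ->
    forall u, \sum_x u x = 1 -> \sum_z app K u z = 1.
  move=> K Ks u us; rewrite /app exchange_big /= -us; apply: eq_bigr => y _.
  by rewrite -mulr_suml Ks mul1r.
have F := @fano M (fun m => app Ka (f m)) g M0
   (fun m => appge0 _ Ka0 _ (f0 m)) (fun m => apps _ Kas _ (fs m)).
apply: le_trans F _.
rewrite -!addrA lerD2l lerD2l.
rewrite (@MI_ext _ _ _ (fun m => app Kd (app Kb (f m)))); last first.
  by move=> j z; apply: app_comp.
apply: le_trans (dproc _ _ _ _) _ => //.
  by move=> j y; exact: (appge0 _ Kb0 _ (f0 j) y).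
rewrite !MI_Hn //; last 2 first.
- have Kc0 : forall z x, 0 <= Kc z x.
    by move=> z x; rewrite Ec; apply: sumr_ge0 => y _; exact: mulr_ge0.
  by move=> j z; exact: (appge0 _ Kc0 _ (f0 j) z).
- by move=> j z; exact: (appge0 _ Kb0 _ (f0 j) z).
- have Ec' : forall z x, Kc z x = \sum_y Ke z y * Kb y x by [].
  have E1 : forall z, mean (fun _ : 'I_M => M%:R^-1) (fun m => app Kc (f m)) z =
      app Ke (mean (fun _ : 'I_M => M%:R^-1) (fun m => app Kb (f m))) z.
    move=> z; rewrite -mean_app /mean; apply: eq_bigr => i _.
    by rewrite (app_comp _ _ Ec).
  rewrite (Hn_ext E1).
  have I1 := @ent_inc Ke (mean (fun _ : 'I_M => M%:R^-1) (fun m => app Kb (f m)))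
     (fun y => sumr_ge0 _ (fun i _ => mulr_ge0 (w0 i) (appge0 _ Kb0 _ (f0 i) y)))
     Ke0 Kes Ker.
  have I2 : forall m, Hn (app Kc (f m)) - Hn (app Kb (f m)) <= D.
    move=> m; apply: (@convex_gap Kb Kc Ke) => //.
  have I3 : \sum_m M%:R^-1 * (Hn (app Kc (f m)) - Hn (app Kb (f m))) <= D.
    apply: le_trans (ler_sum _ (fun m _ => ler_wpM2l (w0 m) (I2 m))) _.
    by rewrite sumr_const card_ord -[(_ * _) *+ _]mulr_natr mulrAC mulVf ?mul1r // gt_eqF.
  rewrite (eq_bigr _ (fun m _ => mulrBr _ _ _)) in I3.
  rewrite sumrB in I3.
  move: I1 I3; set a1 := Hn (mean _ _); set a2 := Hn (app Ke _).
  set s1 := \sum_i _ * Hn (app Kc _); set s2 := \sum_i _ * Hn (app Kb _).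
  move=> I1 I3; clear -I1 I3; lra.
Qed.
End Info.

Section Prod.
Variable K : finType.
Local Notation W := {ffun K -> bool}.

Definition pk (p : K -> R) (z y : W) : R :=
  \prod_k (if z k == y k then 1 - p k else p k).
Definition hb (p : R) : R := - (p * ln p) - (1 - p) * ln (1 - p).

Lemma tot (F : K -> bool -> R) :
  \sum_(z : W) \prod_k F k (z k) = \prod_k (F k true + F k false).
Proof.
rewrite -(bigA_distr_bigA (fun k t => F k t)) /=.
by apply: eq_bigr => k _; rewrite big_bool.
Qed.

Lemma marg (F : K -> bool -> R) (k0 : K) (L : bool -> R) :
  (forall k, k != k0 -> F k true + F k false = 1) ->
  \sum_(z : W) (\prod_k F k (z k)) * L (z k0) = F k0 true * L true + F k0 false * L false.
Proof.
move=> HF.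
pose G k t := F k t * (if k == k0 then L t else 1).
have E : forall z : W, (\prod_k F k (z k)) * L (z k0) = \prod_k G k (z k).
  move=> z; rewrite /G big_split /=; congr (_ * _).
  rewrite (bigD1 k0) //= eqxx big1 ?mulr1 // => k /negbTE ->; by [].
rewrite (eq_bigr _ (fun z _ => E z)) tot (bigD1 k0) //= big1 ?mulr1.
  by rewrite /G eqxx.
by move=> k nk; rewrite /G (negbTE nk) !mulr1 HF.
Qed.

Lemma pk_sum_out p y : \sum_z pk p z y = 1.
Proof.
rewrite /pk (tot (fun k t => if t == y k then 1 - p k else p k)) big1 // => k _.
case: (y k) => /=; ring.
Qed.

Lemma pk_sum_in p z : \sum_y pk p z y = 1.
Proof.
rewrite /pk (tot (fun k t => if z k == t then 1 - p k else p k)) big1 // => k _.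
case: (z k) => /=; ring.
Qed.

Lemma pk_ge0 p z y : (forall k, 0 <= p k <= 1) -> 0 <= pk p z y.
Proof.
move=> H; apply: prodr_ge0 => k _; case: ifP => _; have := H k; lra.
Qed.

Lemma pk_comp (a b d : K -> R) z x :
  (forall k, a k = b k + d k * (1 - 2 * b k)) ->
  pk a z x = \sum_y pk d z y * pk b y x.
Proof.
move=> H; rewrite /pk.
under [RHS]eq_bigr do rewrite -big_split /=.
rewrite (tot (fun k t => (if z k == t then 1 - d k else d k) *
   (if t == x k then 1 - b k else b k))).
apply: eq_bigr => k _; rewrite H.
by case: (z k); case: (x k) => /=; ring.
Qed.

Lemma ln_prod (G : K -> R) : (forall k, 0 < G k) -> ln (\prod_k G k) = \sum_k ln (G k).
Proof.
move=> Gp.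
suff [] : 0 < \prod_k G k /\ ln (\prod_k G k) = \sum_k ln (G k) by [].
apply: (big_rec2 (fun a b => 0 < a /\ ln a = b)); first by rewrite ln1 ltr01.
move=> k y1 y2 _ [y1p <-]; split; first exact: mulr_gt0.
by rewrite lnM ?posrE.
Qed.

Lemma pk_ent p x : (forall k, 0 <= p k <= 1) ->
  Hn (fun z : W => pk p z x) = \sum_k hb (p k).
Proof.
move=> H; rewrite /Hn.
pose G k t := if t == x k then 1 - p k else p k.
have G0 : forall k t, 0 <= G k t by move=> k t; rewrite /G; case: ifP => _; have := H k; lra.
have E : forall z : W, pk p z x * ln (pk p z x) = \sum_k pk p z x * ln (G k (z k)).
  move=> z; rewrite -mulr_sumr.
  have [->|nz] := eqVneq (pk p z x) 0; first by rewrite !mul0r.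
  congr (_ * _); apply: ln_prod => k.
  rewrite lt_def G0 andbT; apply: contra nz => /eqP h.
  by rewrite /pk (bigD1 k) //= h mul0r.
rewrite (eq_bigr _ (fun z _ => E z)) exchange_big /= -sumrN; apply: eq_bigr => k _.
have Mg := @marg (fun i t => G i t) k (fun t => ln (G k t)).
rewrite Mg; last by move=> i _; rewrite /G; case: (x i) => /=; ring.
by rewrite /G /hb; case: (x k) => /=; ring.
Qed.
End Prod.
End Abs.

Section Conc.
Variable R : realType.

Definition dg (p q : R) : R := if q == 2^-1 then 0 else (p - q) / (1 - 2 * q).

Lemma dg_ok (p q : R) : 0 <= q -> q <= p -> p <= 2^-1 ->
  0 <= dg p q <= 1 /\ p = q + dg p q * (1 - 2 * q).
Proof.
move=> q0 qp p2; rewrite /dg; case: eqP => [qE|/eqP qn].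
  rewrite qE in qp q0 *; split; first by rewrite lexx ler01.
  rewrite mul0r addr0; by apply/eqP; rewrite eq_le p2 qp.
have h : 2^-1 + 2^-1 = 1 :> R by field.
have qlt : q < 2^-1 by rewrite lt_def eq_sym qn /=; lra.
have pos : 0 < 1 - 2 * q by lra.
split; last by field; rewrite gt_eqF.
apply/andP; split; first by apply: divr_ge0; lra.
by rewrite ler_pdivrMr // mul1r; lra.
Qed.

Definition pA (N : nat) (pa pb : R) (B : nat) (s : state B) (k : 'I_B * 'I_N) : R :=
  if s k.1 then pa else pb.
Definition pB (N : nat) (p1 p1s p2 : R) (B : nat) (s ss : state B) (k : 'I_B * 'I_N) : R :=
  if s k.1 then p1 else if ss k.1 then p1s else p2.

Lemma code_state (p1 p1s p2 p2s : R) (N B M : nat) (f : 'I_M -> word N B -> R)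
    (g : word N B -> state B -> state B -> 'I_M) (s ss : state B) :
  0 <= p1 -> p1 <= p1s -> p1s <= p2 -> p2 <= p2s -> p2s <= 2^-1 ->
  (0 < M)%N -> is_encoder f ->
  ln M%:R <= ln 2 + (\sum_m \sum_y M%:R^-1 * app (pk (@pA N p1 p2 B s)) (f m) y *
      (if g y s ss != m then 1 else 0)) * ln M%:R
   + MI (fun _ => M%:R^-1) (fun m => app (pk (@pA N p1s p2s B ss)) (f m))
   + \sum_k (hb (@pA N p1s p2s B ss k) - hb (@pB N p1 p1s p2 B s ss k)).
Proof.
move=> h1 h2 h3 h4 h5 M0 enc.
set pa := @pA N p1 p2 B s; set pc := @pA N p1s p2s B ss; set pb := @pB N p1 p1s p2 B s ss.
have hh : 2^-1 + 2^-1 = 1 :> R by field.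
have pa1 : forall k, 0 <= pb k /\ pb k <= pa k /\ pa k <= 2^-1.
  by move=> k; rewrite /pa /pb /pA /pB; case: (s k.1); case: (ss k.1); lra.
have pc1 : forall k, 0 <= pb k /\ pb k <= pc k /\ pc k <= 2^-1.
  by move=> k; rewrite /pc /pb /pA /pB; case: (s k.1); case: (ss k.1); lra.
pose da k := dg (pa k) (pb k).
pose dc k := dg (pc k) (pb k).
have da1 : forall k, 0 <= da k <= 1 /\ pa k = pb k + da k * (1 - 2 * pb k).
  by move=> k; case: (pa1 k) => [? [? ?]]; apply: dg_ok.
have dc1 : forall k, 0 <= dc k <= 1 /\ pc k = pb k + dc k * (1 - 2 * pb k).
  by move=> k; case: (pc1 k) => [? [? ?]]; apply: dg_ok.
have pb01 : forall k, 0 <= pb k <= 1 by move=> k; case: (pa1 k) => [? [? ?]]; lra.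
have pc01 : forall k, 0 <= pc k <= 1 by move=> k; case: (pc1 k) => [? [? ?]]; lra.
apply: (@perstate _ _ M f (fun y => g y s ss) (pk pa) (pk pb) (pk pc) (pk da) (pk dc)) => //.
- by move=> m x; case: (enc m) => H _; apply: H.
- by move=> m; case: (enc m).
- by move=> z y; apply: pk_ge0.
- by move=> z y; apply: pk_ge0 => k; case: (da1 k).
- by move=> z y; apply: pk_ge0 => k; case: (dc1 k).
- by move=> y; apply: pk_sum_out.
- by move=> y; apply: pk_sum_out.
- by move=> y; apply: pk_sum_out.
- by move=> z; apply: pk_sum_in.
- by move=> z x; apply: pk_comp => k; case: (da1 k).
- by move=> z x; apply: pk_comp => k; case: (dc1 k).
- by move=> x; rewrite !pk_ent ?sumrB //.
Qed.

Lemma bf_pk (pa pb : R) N B (s : state B) (x y : word N B) :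
  bfbsc pa pb s x y = pk (@pA N pa pb B s) y x.
Proof. by []. Qed.

Lemma pstate_marg (q : R) B (k0 : 'I_B) (L : bool -> R) :
  \sum_(s : state B) pstate q s * L (s k0) = q * L true + (1 - q) * L false.
Proof.
rewrite /pstate (@marg _ _ (fun k (t : bool) => if t then q else 1 - q) k0 L) //.
by move=> k _ /=; ring.
Qed.

Lemma pstate_sum (q : R) B : \sum_(s : state B) pstate q s = 1.
Proof.
rewrite /pstate (tot (fun k (t : bool) => if t then q else 1 - q)) big1 // => k _.
by ring.
Qed.

Lemma pstate_ge0 (q : R) B (s : state B) : 0 <= q <= 1 -> 0 <= pstate q s.
Proof. by move=> H; apply: prodr_ge0 => k _; case: (s k); lra. Qed.

Lemma avg_h (q qs : R) N B (h : bool -> bool -> R) :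
  \sum_(s : state B) \sum_(ss : state B) pstate q s * pstate qs ss *
     \sum_(k : 'I_B * 'I_N) h (s k.1) (ss k.1)
  = (N * B)%:R * (q * qs * h true true + q * (1 - qs) * h true false
       + (1 - q) * qs * h false true + (1 - q) * (1 - qs) * h false false).
Proof.
under eq_bigr do under eq_bigr do rewrite mulr_sumr.
under eq_bigr do rewrite exchange_big /=.
rewrite exchange_big /=.
rewrite (eq_bigr (fun _ => q * qs * h true true + q * (1 - qs) * h true false
       + (1 - q) * qs * h false true + (1 - q) * (1 - qs) * h false false)).
  by rewrite sumr_const card_prod !card_ord mulnC mulr_natl.
move=> k _.
under eq_bigr do under eq_bigr do rewrite -mulrA.
under eq_bigr => s _ do rewrite -mulr_sumr (pstate_marg qs k.1 (fun t => h (s k.1) t)).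
rewrite (pstate_marg q k.1 (fun t => qs * h t true + (1 - qs) * h t false)).
ring.
Qed.

Lemma err_eq (q1 q1s p1 p2 : R) N B M (f : 'I_M -> word N B -> R)
    (g : word N B -> state B -> state B -> 'I_M) :
  err_prob q1 q1s p1 p2 f g = \sum_(s : state B) \sum_(ss : state B)
    pstate q1 s * pstate q1s ss *
   (\sum_m \sum_y M%:R^-1 * app (pk (@pA N p1 p2 B s)) (f m) y *
      (if g y s ss != m then 1 else 0)).
Proof.
rewrite /err_prob; apply: eq_bigr => s _; apply: eq_bigr => ss _.
rewrite mulr_sumr; apply: eq_bigr => m _.
rewrite exchange_big mulr_sumr /=; apply: eq_bigr => y _.
rewrite /app !big_distrr !big_distrl !big_distrr /=; apply: eq_bigr => x _.
rewrite bf_pk; ring.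
Qed.

Lemma ln2_gt0 : 0 < ln (2 : R).
Proof. by apply: ln_gt0; rewrite ltr1n. Qed.

Lemma leak_eq (q1 q1s p1s p2s : R) N B M (f : 'I_M -> word N B -> R) :
  leakage q1 q1s p1s p2s f * ln 2 = \sum_(s : state B) \sum_(ss : state B)
    pstate q1 s * pstate q1s ss *
    MI (fun _ => M%:R^-1) (fun m => app (pk (@pA N p1s p2s B ss)) (f m)).
Proof.
rewrite /leakage mulr_suml; apply: eq_bigr => s _.
rewrite mulr_suml; apply: eq_bigr => ss _.
rewrite -mulrA; congr (_ * _); rewrite /MI mulr_suml; apply: eq_bigr => m _.
rewrite mulr_suml; apply: eq_bigr => z _.
have zc : forall m, zcond p1s p2s f m ss z = app (pk (@pA N p1s p2s B ss)) (f m) z.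
  by move=> i; rewrite /zcond /app; apply: eq_bigr => x _; rewrite bf_pk mulrC.
have zm : zmarg p1s p2s f ss z =
    mean (fun _ => M%:R^-1) (fun m => app (pk (@pA N p1s p2s B ss)) (f m)) z.
  by rewrite /zmarg /mean mulr_sumr; apply: eq_bigr => i _; rewrite zc.
rewrite zm zc /log2; field; apply/andP; split; last exact: lt0r_neq0 ln2_gt0.
by rewrite pnatr_eq0 -lt0n; exact: (leq_ltn_trans (leq0n _) (ltn_ord m)).
Qed.

Lemma sum2_lin (T : finType) (w A C D : T -> T -> R) (c L : R) :
  \sum_s \sum_t w s t * (c + A s t * L + C s t + D s t) =
  c * (\sum_s \sum_t w s t) + (\sum_s \sum_t w s t * A s t) * L
  + \sum_s \sum_t w s t * C s t + \sum_s \sum_t w s t * D s t.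
Proof.
rewrite mulr_sumr mulr_suml -!big_split /=; apply: eq_bigr => s _.
rewrite mulr_sumr mulr_suml -!big_split /=; apply: eq_bigr => t _.
ring.
Qed.

Lemma code_bound (q1 q1s p1 p1s p2 p2s : R) N B M (f : 'I_M -> word N B -> R)
    (g : word N B -> state B -> state B -> 'I_M) :
  0 <= q1 <= 1 -> 0 <= q1s <= 1 ->
  0 <= p1 -> p1 <= p1s -> p1s <= p2 -> p2 <= p2s -> p2s <= 2^-1 ->
  (0 < M)%N -> is_encoder f ->
  ln M%:R <= ln 2 + err_prob q1 q1s p1 p2 f g * ln M%:R + leakage q1 q1s p1s p2s f * ln 2
     + (N * B)%:R * (q1 * q1s * hb p1s + (1 - q1s) * hb p2s - q1 * hb p1
         - (1 - q1) * (1 - q1s) * hb p2).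
Proof.
move=> hq hqs h1 h2 h3 h4 h5 M0 enc.
pose w (s ss : state B) := pstate q1 s * pstate q1s ss.
have w0 : forall s ss, 0 <= w s ss.
  by move=> s ss; apply: mulr_ge0; apply: pstate_ge0.
have wsum : \sum_s \sum_ss w s ss = 1.
  rewrite -(pstate_sum q1 B); apply: eq_bigr => s _.
  by rewrite /w -mulr_sumr pstate_sum mulr1.
have S : \sum_s \sum_ss w s ss * ln M%:R <= \sum_s \sum_ss w s ss *
   (ln 2 + (\sum_m \sum_y M%:R^-1 * app (pk (@pA N p1 p2 B s)) (f m) y *
      (if g y s ss != m then 1 else 0)) * ln M%:R
   + MI (fun _ => M%:R^-1) (fun m => app (pk (@pA N p1s p2s B ss)) (f m))
   + \sum_k (hb (@pA N p1s p2s B ss k) - hb (@pB N p1 p1s p2 B s ss k))).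
  apply: ler_sum => s _; apply: ler_sum => ss _; apply: ler_wpM2l => //.
  exact: code_state.
have L1 : \sum_s \sum_ss w s ss * ln M%:R = ln M%:R.
  rewrite -[RHS]mul1r -wsum mulr_suml; apply: eq_bigr => s _; by rewrite mulr_suml.
rewrite sum2_lin L1 wsum mulr1 in S.
apply: (le_trans S); rewrite err_eq leak_eq.
have := @avg_h q1 q1s N B (fun t t' => hb (if t' then p1s else p2s) -
   hb (if t then p1 else if t' then p1s else p2)).
move=> /= E; rewrite E.
have -> : (q1 * q1s * (hb p1s - hb p1) + q1 * (1 - q1s) * (hb p2s - hb p1) +
  (1 - q1) * q1s * (hb p1s - hb p1s) + (1 - q1) * (1 - q1s) * (hb p2s - hb p2)) =
  (q1 * q1s * hb p1s + (1 - q1s) * hb p2s - q1 * hb p1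
         - (1 - q1) * (1 - q1s) * hb p2) by ring.
by [].
Qed.
End Conc.

Lemma hb_H2 (R : realType) (p : R) : hb p = H2 p * ln 2.
Proof.
rewrite /hb /H2 /log2; field; exact: lt0r_neq0 (@ln2_gt0 R).
Qed.

Lemma code_bound2 (R : realType) (q1 q1s p1 p1s p2 p2s : R) N B M
    (f : 'I_M -> word N B -> R) (g : word N B -> state B -> state B -> 'I_M) :
  0 <= q1 <= 1 -> 0 <= q1s <= 1 ->
  0 <= p1 -> p1 <= p1s -> p1s <= p2 -> p2 <= p2s -> p2s <= 2^-1 ->
  (0 < M)%N -> is_encoder f ->
  log2 M%:R <= 1 + err_prob q1 q1s p1 p2 f g * log2 M%:R + leakage q1 q1s p1s p2s f
     + (N * B)%:R * (q1 * q1s * H2 p1s + (1 - q1s) * H2 p2s - q1 * H2 p1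
         - (1 - q1) * (1 - q1s) * H2 p2).
Proof.
move=> *; have := @code_bound R q1 q1s p1 p1s p2 p2s N B M f g.
rewrite !hb_H2 => H; have {H} H := H ltac:(assumption) ltac:(assumption)
  ltac:(assumption) ltac:(assumption) ltac:(assumption) ltac:(assumption)
  ltac:(assumption) ltac:(assumption) ltac:(assumption).
have l2 := @ln2_gt0 R.
rewrite /log2 -(@ler_pM2r _ (ln 2)) //.
have -> : (1 + err_prob q1 q1s p1 p2 f g * (ln M%:R / ln 2) +
   leakage q1 q1s p1s p2s f + (N * B)%:R * (q1 * q1s * H2 p1s + (1 - q1s) * H2 p2s
    - q1 * H2 p1 - (1 - q1) * (1 - q1s) * H2 p2)) * ln 2 =
   ln 2 + err_prob q1 q1s p1 p2 f g * ln M%:R + leakage q1 q1s p1s p2s f * ln 2 +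
     (N * B)%:R * (q1 * q1s * (H2 p1s * ln 2) + (1 - q1s) * (H2 p2s * ln 2) -
       q1 * (H2 p1 * ln 2) - (1 - q1) * (1 - q1s) * (H2 p2 * ln 2)).
  by field; exact: lt0r_neq0.
by rewrite divfK ?lt0r_neq0.
Qed.

Unset Implicit Arguments.
Theorem lemma3 (R : realType) (q1 q1s p1 p1s p2 p2s : R) :
  0 <= q1 <= 1 -> 0 <= q1s <= 1 ->
  0 <= p1 -> p1 <= p1s -> p1s <= p2 -> p2 <= p2s -> p2s <= 1 / 2 ->
  (CsCSID q1 q1s p1 p2 p1s p2s <=
    (q1 * q1s * H2 p1s + (1 - q1s) * H2 p2s - q1 * H2 p1
      - (1 - q1) * (1 - q1s) * H2 p2)%:E)%E.
Proof.
move=> hq hqs h1 h2 h3 h4 h5.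
rewrite div1r in h5.
set C := q1 * q1s * H2 p1s + (1 - q1s) * H2 p2s - q1 * H2 p1 - (1 - q1) * (1 - q1s) * H2 p2.
apply: ge_ereal_sup => _ [r ach <-]; rewrite lee_fin.
rewrite leNgt; apply/negP => Cr.
set d := r - C.
have dp : 0 < d by rewrite /d subr_gt0.
have ra : 0 < `|r| + 2 by rewrite ltr_wpDl.
set t := Num.min (2^-1) (d / (4 * (`|r| + 2))).
have tp : 0 < t by rewrite lt_min invr_gt0 ltr0n /= divr_gt0 // mulr_gt0.
have t2 : t <= 2^-1 by rewrite ge_min lexx.
have t3 : t * (`|r| + 2) <= d / 4.
  have : t <= d / (4 * (`|r| + 2)) by rewrite ge_min lexx orbT.
  move=> h; have := ler_wpM2r (ltW ra) h.
  move=> H; apply: le_trans H _; rewrite le_eqVlt; apply/orP; left; apply/eqP; field.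
  exact: lt0r_neq0.
have f4 : (0:R) < 4 by lra.
have b0 := @archi_boundP R (4 / d) (ltW (divr_gt0 f4 dp)).
set N0 := Num.Def.archi_bound (4 / d) in b0.
have [N [B [M [f [g [[hN hB hM enc] [hr he hl]]]]]]] := ach t tp N0.+1 1%N.
have Np : (0 < N)%N by apply: leq_trans hN.
have Bp : (0 < B)%N by [].
have np : 0 < (N * B)%:R :> R by rewrite ltr0n muln_gt0 Np.
have nbig : 4 / d < (N * B)%:R :> R.
  apply: (lt_le_trans b0); rewrite ler_nat.
  apply: leq_trans (ltnW hN) _; rewrite -{1}[N]muln1; exact: leq_mul.
have key := @code_bound2 R q1 q1s p1 p1s p2 p2s N B M f g hq hqs h1 h2 h3 h4 h5 hM enc.
rewrite -/C in key.
set L := log2 M%:R in key hr.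
set n := (N * B)%:R in np nbig hr hl key.
have L0 : 0 <= L.
  rewrite /L /log2; apply: divr_ge0; last exact: ltW (@ln2_gt0 R).
  by apply: ln_ge0; rewrite ler1n.
have F3 : n * (r - t) <= L by rewrite mulrC -ler_pdivlMr.
have F2 : leakage q1 q1s p1s p2s f <= t * n by rewrite -ler_pdivrMr.
have F1 : err_prob q1 q1s p1 p2 f g * L <= t * L by apply: ler_wpM2r.
have G1 : (1 - t) * (n * (r - t)) <= (1 - t) * L by apply: ler_wpM2l; lra.
have nd : 4 < n * d by rewrite -ltr_pdivrMr.
have E1 : r * t <= `|r| * t by apply: ler_wpM2r; [exact: ltW | exact: ler_norm].
have T2 : 0 <= t * t by apply: mulr_ge0; exact: ltW.
have K1 : (1 - t) * (r - t) - t - C >= d - t * (`|r| + 2).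
  rewrite /d; nra.
have K2 : n * ((1 - t) * (r - t) - t - C) <= 1 by nra.
have K3 : n * (d - t * (`|r| + 2)) <= n * ((1 - t) * (r - t) - t - C).
  by apply: ler_wpM2l; [exact: ltW|].
have K4 : n * (d / 4) <= n * (d - t * (`|r| + 2)) by apply: ler_wpM2l; [exact: ltW|lra].
have K5 : n * (d / 4) = (n * d) / 4 by rewrite mulrA.
lra.
Qed.
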